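(* Let $X$ be a topological space and $G\subset\mathrm{Hom}(X)$ a group of homeomorphisms such that the topology of pointwise convergence $\tau_p$ is an admissible group topology on $G$; $G$ carries $\tau_p$. Let $\mathcal U_X$ be an equiuniformity on $X$ for the action of $G$, and let $\mathcal U$ and $R_{\mathcal K}$ be the uniformities on $G$ defined below. If $\mathcal U=R_{\mathcal K}$ and $\mathcal U_X$ is totally bounded, then $G$ is Roelcke precompact.
   Context: Admissible group topology: $G$ is a topological group and the action on $X$ is continuous. $\tau_p$ has subbase $\{f\in G\mid f(x)\in O\}$, $x\in X$, $O$ open. An equiuniformity on $X$ is a compatible uniformity for which each $g\in G$ is uniformly continuous and for every uniform covering $u$ there are a neighbourhood $O$ of the identity in $G$ and a uniform covering $v$ with $\{OV\mid V\in v\}$ refining $u$. $\mathcal U$ is the uniformity on $G$ with base the coverings $\{\{h\in G\mid (g(x_k),h(x_k))\in\mathrm U,\ k=1,\dots,n\}\mid g\in G\}$, for $x_1,\dots,x_n\in X$ and $\mathrm U$ an entourage of $\mathcal U_X$. $R_{\mathcal K}$ is the uniformity on $G$ with base the coverings $\{Og\,\mathrm{St}_{x_1,\dots,x_n}\mid g\in G\}$, $O$ a neighbourhood of the identity, $x_1,\dots,x_n\in X$, where $\mathrm{St}_{x_1,\dots,x_n}$ is the pointwise stabilizer. The Roelcke uniformity $L\wedge R$ on a topological group is the greatest lower bound of the left and right uniformities (base: coverings $\{UgU\mid g\in G\}$, $U$ a neighbourhood of the identity); $G$ is Roelcke precompact if $L\wedge R$ is totally bounded. *)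

(* Defs.v *)
From mathcomp Require Import all_boot all_order all_algebra.
From mathcomp Require Import all_classical all_reals all_analysis.

Set Implicit Arguments.
Unset Strict Implicit.
Unset Printing Implicit Defensive.

Local Open Scope classical_set_scope.

Definition is_group_of_homeos (X : topologicalType) (G : set (X -> X)) : Prop :=
  [/\ G id,
      (forall f g, G f -> G g -> G (f \o g)),
      (forall f, G f -> exists g, G g /\ g \o f = id /\ f \o g = id)
    & (forall f, G f -> continuous f)].

(* N is a neighbourhood of g in (G, tau_p): it contains a finite intersection
   of subbasic sets {h in G | h x_i \in O_i}, O_i open, containing g. *)
Definition tp_nbhd (X : topologicalType) (G : set (X -> X)) (g : X -> X)
  (N : set (X -> X)) : Prop :=
  exists (n : nat) (xs : 'I_n -> X) (Os : 'I_n -> set X),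
    (forall i, open (Os i) /\ Os i (g (xs i))) /\
    [set h | G h /\ forall i, Os i (h (xs i))] `<=` N.

(* tau_p is an admissible group topology on G: (G, tau_p) is a topological
   group and the action G x X -> X is continuous. *)
Definition admissible_tp (X : topologicalType) (G : set (X -> X)) : Prop :=
  [/\ (forall g h, G g -> G h -> forall W, tp_nbhd G (g \o h) W ->
         exists U V, [/\ tp_nbhd G g U, tp_nbhd G h V &
           forall u v, G u -> G v -> U u -> V v -> W (u \o v)]),
      (forall g g', G g -> G g' -> g' \o g = id -> forall W, tp_nbhd G g' W ->
         exists U, tp_nbhd G g U /\
           forall h h', G h -> G h' -> h' \o h = id -> U h -> W h')
    & (forall g x, G g -> forall O, open O -> O (g x) ->
         exists U V, [/\ tp_nbhd G g U, nbhs x V &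
           forall h y, G h -> U h -> V y -> O (h y)])].

Definition refines (T : Type) (b u : set (set T)) : Prop :=
  forall V, b V -> exists2 U, u U & V `<=` U.

(* Uniform coverings of a uniform space (covering description of the
   uniformity): covers refined by {E[x] | x in X} for an entourage E. *)
Definition unif_cover (X : uniformType) (u : set (set X)) : Prop :=
  exists2 E, entourage E &
    forall x, exists2 U, u U & [set y | E (x, y)] `<=` U.

Definition equiuniform (X : uniformType) (G : set (X -> X)) : Prop :=
  (forall g, G g -> forall E, entourage E ->
     exists2 D, entourage D & forall x y, D (x, y) -> E (g x, g y)) /\
  (forall u, unif_cover u ->
     exists O v, [/\ tp_nbhd G id O, unif_cover v &
       refines [set [set z | exists g y, [/\ O g, G g, V y & z = g y]]
                 | V in v] u]).

Definition gen_unif (T : Type) (B : set (set (set T))) : set (set (set T)) :=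
  [set u | exists2 b, B b & refines b u].

Definition U_base (X : uniformType) (G : set (X -> X)) : set (set (set (X -> X))) :=
  [set b | exists A E, [/\ finite_set A, entourage E &
     b = [set [set h | G h /\ forall x, A x -> E (g x, h x)] | g in G]]].

Definition St (X : Type) (G : set (X -> X)) (A : set X) : set (X -> X) :=
  [set h | G h /\ forall x, A x -> h x = x].

Definition R_base (X : topologicalType) (G : set (X -> X)) : set (set (set (X -> X))) :=
  [set b | exists O A, [/\ tp_nbhd G id O, finite_set A &
     b = [set [set f | exists o s, [/\ O o, G o, St G A s & f = o \o g \o s]]
           | g in G]]].

Definition LR_base (X : topologicalType) (G : set (X -> X)) : set (set (set (X -> X))) :=
  [set b | exists U, tp_nbhd G id U /\
     b = [set [set f | exists u v, [/\ U u, G u, U v, G v & f = u \o g \o v]]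
           | g in G]].

Definition totally_bounded_cov (T : Type) (C : set (set (set T))) (A : set T) : Prop :=
  forall u, C u -> exists (n : nat) (Us : 'I_n -> set T),
    (forall i, u (Us i)) /\ A `<=` [set t | exists i, Us i t].

Definition roelcke_precompact (X : topologicalType) (G : set (X -> X)) : Prop :=
  totally_bounded_cov (gen_unif (LR_base G)) G.

(* Main.v *)
Require Import Defs.
From mathcomp Require Import all_boot all_order all_algebra.
From mathcomp Require Import all_classical all_reals all_analysis.
From Stdlib Require List.

Local Open Scope classical_set_scope.

Lemma in_ListIn (T : eqType) (x : T) (s : seq T) : x \in s -> List.In x s.
Proof.
elim: s => [//|y s IH]; rewrite inE => /orP [/eqP ->|/IH H]; [left|right] => //.
Qed.

Lemma cover_list (X : uniformType) (E : set (X * X)) : entourage E ->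
  totally_bounded_cov (@unif_cover X) setT ->
  exists L : list (set X), (forall B, List.In B L -> forall z w, B z -> B w -> E (z, w))
    /\ forall z, exists B, List.In B L /\ B z.
Proof.
move=> entE tb.
pose D := split_ent E `&` [set xy | split_ent E (xy.2, xy.1)].
have entD : entourage D by apply: (entourage_invI (entourage_split_ent entE)).
have [|n [Us [HU Hcov]]] := tb [set B | exists y, B = [set z | D (y, z)]].
  by exists D => // x; exists [set z | D (x, z)] => //; exists x.
exists (map Us (enum 'I_n)); split.
  move=> B /List.in_map_iff [i [<- _]] z w.
  have [y ->] := HU i => /= [[_ Hz]] [Hw _].
  by apply: (entourage_split y entE).
move=> z; have [i Hi] := Hcov z I; exists (Us i); split => //.
by apply: List.in_map; apply: in_ListIn; rewrite mem_enum.
Qed.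

Lemma cells (X : uniformType) (E : set (X * X)) (L : list (set X)) :
  (forall B, List.In B L -> forall z w, B z -> B w -> E (z, w)) ->
  (forall z, exists B, List.In B L /\ B z) ->
  forall s : seq X, exists cs : list (set (X -> X)),
    (forall C, List.In C cs -> forall g h, C g -> C h -> forall x, x \in s -> E (g x, h x))
    /\ forall h, exists C, List.In C cs /\ C h.
Proof.
move=> HL HLc; elim => [|a s [cs [Hcs Hcov]]].
  by exists [:: setT]; split => // h; exists setT; split => //; left.
exists (List.flat_map (fun C => List.map (fun B => C `&` [set h | B (h a)]) L) cs); split.
  move=> C' /List.in_flat_map [C [inC /List.in_map_iff [B [<- inB]]]] g h [Cg Bg] [Ch Bh] x.
  rewrite inE => /orP [/eqP ->|xs]; first exact: (HL B).
  exact: (Hcs C).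
move=> h; have [C [inC Ch]] := Hcov h; have [B [inB Bh]] := HLc (h a).
exists (C `&` [set h | B (h a)]); split => //.
apply/List.in_flat_map; exists C; split => //; apply/List.in_map_iff; by exists B.
Qed.

Theorem corollary2p2 (X : uniformType) (G : set (X -> X)) :
  is_group_of_homeos G ->
  admissible_tp G ->
  equiuniform G ->
  gen_unif (U_base G) = gen_unif (R_base G) ->
  totally_bounded_cov (@unif_cover X) setT ->
  roelcke_precompact G.
Proof.
move=> [Gid _ _ _] _ _ UR tb u [b [U [[n [xs [Os [HOs HU]]]] ->]] bu].
pose O := [set h | G h /\ forall i, Os i (h (xs i))].
have OU : O `<=` U by [].
have tO : tp_nbhd G id O by exists n, xs, Os; split.
pose A := xs @` setT.
have finA : finite_set A by apply: finite_image; apply: finite_finset.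
pose c := [set [set f | exists o s, [/\ O o, G o, St G A s & f = o \o g \o s]]
           | g in G].
have : gen_unif (R_base G) c by exists c; [exists O, A | move=> V cV; exists V].
rewrite -UR => -[b' [A' [E [finA' entE ->]]] b'c].
have [s As] := (finite_seqP A').1 finA'.
have [L [HL HLc]] := @cover_list X E entE tb.
have [cs [Hcs Hcov]] := @cells X E L HL HLc s.
have key : forall g, G g -> exists W, u W /\
    [set h | G h /\ forall x, A' x -> E (g x, h x)] `<=` W.
  move=> g Gg.
  have [V [g' Gg' <-] sV] := b'c _ (ex_intro2 _ _ g Gg erefl).
  have [W uW sW] := bu [set f | exists u v, [/\ U u, G u, U v, G v & f = u \o g' \o v]]
    (ex_intro2 _ _ g' Gg' erefl).
  exists W; split => //; move=> h /sV [ o1 [t0 [Oo Go [Gs Ss] ->]]].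
  apply: sW; exists o1, t0; split => //; first exact: OU.
  apply: OU; split => // i; rewrite Ss; last by exists i.
  by have [] := HOs i.
have cellW : forall C, exists W, u W /\ (List.In C cs -> (C `&` G) `<=` W).
  move=> C; have [[h [Ch Gh]]|C0] := pselect (exists h, C h /\ G h).
    have [W [uW sW]] := key h Gh; exists W; split => // inC h' [Ch' Gh'].
    apply: sW; split => // x; rewrite As => xs'.
    exact: (Hcs C inC h h').
  have [W [uW _]] := key id Gid; exists W; split => // _ h' [Ch' Gh'].
  by exfalso; apply: C0; exists h'.
have [f Hf] := choice cellW.
exists (size cs), (fun i : 'I_(size cs) => f (List.nth i cs set0)); split.
  by move=> i; have [] := Hf (List.nth i cs set0).
move=> h Gh; have [C [inC Ch]] := Hcov h.
have [k [klt Ck]] := List.In_nth _ _ set0 inC.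
have klt' : (k < size cs)%N by apply/ltP.
exists (Ordinal klt') => /=; rewrite Ck.
by have [_ HC] := Hf C; apply: HC.
Qed.
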